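(* Let $c_1>0>c_2$, $\alpha\in[0,1)$, $t_0\in\mathbb R$, let $d_1,d_2$ be as in the context, $\tilde L=d_1-d_2$, and for $t>t_0$ let $$\tilde p_1(t)=\frac{d_2-d_1e^{-\tilde L(t-t_0)}}{1-e^{-\tilde L(t-t_0)}},\quad \tilde p_2(t)=\frac{d_1-d_2e^{-\tilde L(t-t_0)}}{1-e^{-\tilde L(t-t_0)}},$$ $$\tilde q_1(t)=\ln\tilde L+d_2(t-t_0)-\ln\big(d_1e^{-\tilde L(t-t_0)}-d_2\big),\quad \tilde q_2(t)=-\ln\tilde L+d_1(t-t_0)+\ln\big(d_1-d_2e^{-\tilde L(t-t_0)}\big),$$ and $u(t,x)=\tilde p_1(t)e^{-|x-\tilde q_1(t)|}+\tilde p_2(t)e^{-|x-\tilde q_2(t)|}$. Then $\tilde q_1(t)\le\tilde q_2(t)$ for $t>t_0$, $u(t,x)\to(c_1+c_2)e^{-|x|}$ as $t\downarrow t_0$, and for every $t>t_0$ $$\int_{\mathbb R}\big(u(t,x)^2+u_x(t,x)^2\big)dx=2d_1^2+2d_2^2=2c_1^2+2c_2^2+4\alpha c_1c_2 .$$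
   Context: Here $d_1=\tfrac12(c_1+c_2)+\sqrt{\tfrac14(c_1+c_2)^2-(1-\alpha)c_1c_2}$ and $d_2=\tfrac12(c_1+c_2)-\sqrt{\tfrac14(c_1+c_2)^2-(1-\alpha)c_1c_2}$. *)

(* Defs.v *)
From Stdlib Require Import Reals Lra ClassicalEpsilon ClassicalDescription.
Open Scope R_scope.

Definition dd1 (c1 c2 alpha : R) : R :=
  (c1 + c2) / 2 + sqrt ((c1 + c2) ^ 2 / 4 - (1 - alpha) * c1 * c2).
Definition dd2 (c1 c2 alpha : R) : R :=
  (c1 + c2) / 2 - sqrt ((c1 + c2) ^ 2 / 4 - (1 - alpha) * c1 * c2).
Definition Lt (c1 c2 alpha : R) : R := dd1 c1 c2 alpha - dd2 c1 c2 alpha.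

Definition p1t (c1 c2 alpha t0 t : R) : R :=
  let E := exp (- Lt c1 c2 alpha * (t - t0)) in
  (dd2 c1 c2 alpha - dd1 c1 c2 alpha * E) / (1 - E).
Definition p2t (c1 c2 alpha t0 t : R) : R :=
  let E := exp (- Lt c1 c2 alpha * (t - t0)) in
  (dd1 c1 c2 alpha - dd2 c1 c2 alpha * E) / (1 - E).
Definition q1t (c1 c2 alpha t0 t : R) : R :=
  let E := exp (- Lt c1 c2 alpha * (t - t0)) in
  ln (Lt c1 c2 alpha) + dd2 c1 c2 alpha * (t - t0)
  - ln (dd1 c1 c2 alpha * E - dd2 c1 c2 alpha).
Definition q2t (c1 c2 alpha t0 t : R) : R :=
  let E := exp (- Lt c1 c2 alpha * (t - t0)) in
  - ln (Lt c1 c2 alpha) + dd1 c1 c2 alpha * (t - t0)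
  + ln (dd1 c1 c2 alpha - dd2 c1 c2 alpha * E).

Definition u (c1 c2 alpha t0 t x : R) : R :=
  p1t c1 c2 alpha t0 t * exp (- Rabs (x - q1t c1 c2 alpha t0 t))
  + p2t c1 c2 alpha t0 t * exp (- Rabs (x - q2t c1 c2 alpha t0 t)).

(* Partial derivative in x: the derivative where it exists, 0 elsewhere
   (only finitely many points, irrelevant for the integral). *)
Definition deriv_or0 (f : R -> R) (x : R) : R :=
  match excluded_middle_informative (exists l, derivable_pt_lim f x l) with
  | left H => proj1_sig (constructive_indefinite_description _ H)
  | right _ => 0
  end.

Definition improper_integral_R (f : R -> R) (V : R) : Prop :=
  (forall a b, inhabited (Riemann_integrable f a b)) /\
  forall eps, 0 < eps -> exists M, forall a b (pr : Riemann_integrable f a b),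
    a <= - M -> M <= b -> Rabs (RiemannInt pr - V) < eps.

(* Main.v *)
Require Import Defs.
From Stdlib Require Import Reals Lra ClassicalEpsilon ClassicalDescription.
From Coquelicot Require Import Coquelicot.
Open Scope R_scope.

Lemma deriv_or0_eq f x l : derivable_pt_lim f x l -> deriv_or0 f x = l.
Proof.
  intros H. unfold deriv_or0.
  destruct (excluded_middle_informative (exists l0, derivable_pt_lim f x l0)) as [H1|H1].
  - destruct (constructive_indefinite_description _ H1) as [l' Hl']; simpl.
    exact (uniqueness_limite f x l' l Hl' H).
  - exfalso; apply H1; exists l; exact H.
Qed.

Definition Upk (p1 p2 q1 q2 y : R) : R :=
  p1 * exp (- Rabs (y - q1)) + p2 * exp (- Rabs (y - q2)).

Lemma e_left y q : y < q -> exp (- Rabs (y - q)) = exp (y - q).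
Proof. intros H; rewrite Rabs_left by lra; f_equal; ring. Qed.
Lemma e_right y q : q < y -> exp (- Rabs (y - q)) = exp (q - y).
Proof. intros H; rewrite Rabs_right by lra; f_equal; ring. Qed.

Definition h1 p1 p2 q1 q2 x := p1 * exp (x - q1) + p2 * exp (x - q2).
Definition h3 p1 p2 q1 q2 x := p1 * exp (q1 - x) + p2 * exp (q2 - x).
Definition PP p1 q1 x := p1 * exp (q1 - x).
Definition QQ p2 q2 x := p2 * exp (x - q2).

Lemma U_r1 p1 p2 q1 q2 x : q1 < q2 -> x < q1 -> Upk p1 p2 q1 q2 x = h1 p1 p2 q1 q2 x.
Proof. intros; unfold Upk, h1; rewrite !e_left by lra; ring. Qed.
Lemma U_r2 p1 p2 q1 q2 x : q1 < x < q2 -> Upk p1 p2 q1 q2 x = PP p1 q1 x + QQ p2 q2 x.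
Proof. intros; unfold Upk, PP, QQ; rewrite e_right, e_left by lra; ring. Qed.
Lemma U_r3 p1 p2 q1 q2 x : q1 < q2 -> q2 < x -> Upk p1 p2 q1 q2 x = h3 p1 p2 q1 q2 x.
Proof. intros; unfold Upk, h3; rewrite !e_right by lra; ring. Qed.

Lemma D_r1 p1 p2 q1 q2 x : q1 < q2 -> x < q1 ->
  derivable_pt_lim (Upk p1 p2 q1 q2) x (h1 p1 p2 q1 q2 x).
Proof.
  intros H Hx. apply is_derive_Reals.
  apply is_derive_ext_loc with (f := h1 p1 p2 q1 q2).
  - apply filter_imp with (P := fun y => y < q1).
    + intros y Hy. symmetry; apply U_r1; lra.
    + apply open_lt; exact Hx.
  - unfold h1. auto_derive; auto; unfold Rminus; ring.
Qed.

Lemma D_r2 p1 p2 q1 q2 x : q1 < x < q2 ->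
  derivable_pt_lim (Upk p1 p2 q1 q2) x (QQ p2 q2 x - PP p1 q1 x).
Proof.
  intros Hx. apply is_derive_Reals.
  apply is_derive_ext_loc with (f := fun y => PP p1 q1 y + QQ p2 q2 y).
  - apply filter_imp with (P := fun y => q1 < y /\ y < q2).
    + intros y Hy. symmetry; apply U_r2; lra.
    + apply (open_and _ _ (open_gt q1) (open_lt q2)); lra.
  - unfold PP, QQ. auto_derive; auto; unfold Rminus; ring.
Qed.

Lemma D_r3 p1 p2 q1 q2 x : q1 < q2 -> q2 < x ->
  derivable_pt_lim (Upk p1 p2 q1 q2) x (- h3 p1 p2 q1 q2 x).
Proof.
  intros H Hx. apply is_derive_Reals.
  apply is_derive_ext_loc with (f := h3 p1 p2 q1 q2).
  - apply filter_imp with (P := fun y => q2 < y).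
    + intros y Hy. symmetry; apply U_r3; lra.
    + apply open_gt; exact Hx.
  - unfold h3. auto_derive; auto; unfold Rminus; ring.
Qed.

Lemma RInt_piece (G g F : R -> R) a b : a < b ->
  (forall x, is_derive G x (g x)) -> (forall x, continuous g x) ->
  (forall x, a < x < b -> g x = F x) -> is_RInt F a b (G b - G a).
Proof.
  intros Hab HG Hg HF.
  apply is_RInt_ext with (f := g).
  - rewrite Rmin_left, Rmax_right by lra. exact HF.
  - apply (is_RInt_derive G g a b (fun x _ => HG x) (fun x _ => Hg x)).
Qed.

Definition Fpk p1 p2 q1 q2 x :=
  Upk p1 p2 q1 q2 x ^ 2 + deriv_or0 (Upk p1 p2 q1 q2) x ^ 2.

Lemma I1 p1 p2 q1 q2 a : q1 < q2 -> a < q1 ->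
  is_RInt (Fpk p1 p2 q1 q2) a q1 (h1 p1 p2 q1 q2 q1 ^ 2 - h1 p1 p2 q1 q2 a ^ 2).
Proof.
  intros H Ha.
  apply (RInt_piece (fun x => h1 p1 p2 q1 q2 x ^ 2) (fun x => 2 * h1 p1 p2 q1 q2 x ^ 2)).
  - lra.
  - intros x; unfold h1; auto_derive; auto; unfold Rminus; ring.
  - intros x; apply (ex_derive_continuous (K:=R_AbsRing) (V:=R_NormedModule)); unfold h1; auto_derive; auto.
  - intros x Hx. unfold Fpk. rewrite (deriv_or0_eq _ _ _ (D_r1 p1 p2 q1 q2 x H (proj2 Hx))).
    rewrite U_r1 by lra. ring.
Qed.

Lemma I2 p1 p2 q1 q2 : q1 < q2 ->
  is_RInt (Fpk p1 p2 q1 q2) q1 q2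
   ((QQ p2 q2 q2 ^ 2 - PP p1 q1 q2 ^ 2) - (QQ p2 q2 q1 ^ 2 - PP p1 q1 q1 ^ 2)).
Proof.
  intros H.
  apply (RInt_piece (fun x => QQ p2 q2 x ^ 2 - PP p1 q1 x ^ 2)
           (fun x => 2 * QQ p2 q2 x ^ 2 + 2 * PP p1 q1 x ^ 2)).
  - lra.
  - intros x; unfold QQ, PP; auto_derive; auto; unfold Rminus; ring.
  - intros x; apply (ex_derive_continuous (K:=R_AbsRing) (V:=R_NormedModule)); unfold QQ, PP; auto_derive; auto.
  - intros x Hx. unfold Fpk. rewrite (deriv_or0_eq _ _ _ (D_r2 p1 p2 q1 q2 x Hx)).
    rewrite U_r2 by lra. ring.
Qed.

Lemma I3 p1 p2 q1 q2 b : q1 < q2 -> q2 < b ->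
  is_RInt (Fpk p1 p2 q1 q2) q2 b (h3 p1 p2 q1 q2 q2 ^ 2 - h3 p1 p2 q1 q2 b ^ 2).
Proof.
  intros H Hb.
  replace (h3 p1 p2 q1 q2 q2 ^ 2 - h3 p1 p2 q1 q2 b ^ 2) with
    ((fun x => - h3 p1 p2 q1 q2 x ^ 2) b - (fun x => - h3 p1 p2 q1 q2 x ^ 2) q2) by (simpl; ring).
  apply (RInt_piece (fun x => - h3 p1 p2 q1 q2 x ^ 2) (fun x => 2 * h3 p1 p2 q1 q2 x ^ 2)).
  - lra.
  - intros x; unfold h3; auto_derive; auto; unfold Rminus; ring.
  - intros x; apply (ex_derive_continuous (K:=R_AbsRing) (V:=R_NormedModule)); unfold h3; auto_derive; auto.
  - intros x Hx. unfold Fpk. rewrite (deriv_or0_eq _ _ _ (D_r3 p1 p2 q1 q2 x H (proj1 Hx))).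
    rewrite U_r3 by lra. ring.
Qed.

Lemma Iall p1 p2 q1 q2 a b : q1 < q2 -> a < q1 -> q2 < b ->
  is_RInt (Fpk p1 p2 q1 q2) a b
   ((h1 p1 p2 q1 q2 q1 ^ 2 - h1 p1 p2 q1 q2 a ^ 2) +
    ((QQ p2 q2 q2 ^ 2 - PP p1 q1 q2 ^ 2) - (QQ p2 q2 q1 ^ 2 - PP p1 q1 q1 ^ 2)) +
    (h3 p1 p2 q1 q2 q2 ^ 2 - h3 p1 p2 q1 q2 b ^ 2)).
Proof.
  intros H Ha Hb.
  pose proof (is_RInt_Chasles _ _ _ _ _ _ (I1 p1 p2 q1 q2 a H Ha) (I2 p1 p2 q1 q2 H)) as A.
  pose proof (is_RInt_Chasles _ _ _ _ _ _ A (I3 p1 p2 q1 q2 b H Hb)) as B.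
  exact B.
Qed.

Lemma ex_all p1 p2 q1 q2 a b : q1 < q2 -> ex_RInt (Fpk p1 p2 q1 q2) a b.
Proof.
  intros H.
  assert (K : forall a b, a <= b -> ex_RInt (Fpk p1 p2 q1 q2) a b).
  { clear a b. intros a b Hab.
    set (m := Rmin a q1 - 1). set (n := Rmax b q2 + 1).
    assert (Hm : m < q1) by (unfold m; generalize (Rmin_r a q1); lra).
    assert (Hn : q2 < n) by (unfold n; generalize (Rmax_r b q2); lra).
    assert (Ha : m <= a) by (unfold m; generalize (Rmin_l a q1); lra).
    assert (Hb : b <= n) by (unfold n; generalize (Rmax_l b q2); lra).
    assert (E : ex_RInt (Fpk p1 p2 q1 q2) m n) by (eexists; apply Iall; auto).
    apply (ex_RInt_Chasles_1 (V:=R_CompleteNormedModule) _ a b n). lra.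
    apply (ex_RInt_Chasles_2 (V:=R_CompleteNormedModule) _ m a n). lra. exact E. }
  destruct (Rle_dec a b). apply K; auto. apply (ex_RInt_swap (V:=R_NormedModule)), K; lra.
Qed.

Lemma exp_le_mono x y : x <= y -> exp x <= exp y.
Proof. intros [H|H]. left; apply exp_increasing; auto. subst; lra. Qed.

Lemma peak_int p1 p2 q1 q2 : q1 < q2 ->
  improper_integral_R (Fpk p1 p2 q1 q2)
    (2 * p1 ^ 2 + 2 * p2 ^ 2 + 4 * p1 * p2 * exp (q1 - q2)).
Proof.
  intros H. split.
  { intros a b. constructor. apply ex_RInt_Reals_0, ex_all; auto. }
  intros eps Heps.
  set (A := p1 * exp (- q1) + p2 * exp (- q2)).
  set (B := p1 * exp q1 + p2 * exp q2).
  set (K := A ^ 2 + B ^ 2 + 1).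
  assert (HK : 0 < K) by (unfold K; nra).
  exists (Rmax (Rmax (Rabs q1 + 1) (Rabs q2 + 1)) (Rabs (ln (K / eps)))).
  intros a b pr Ha Hb.
  set (M := Rmax (Rmax (Rabs q1 + 1) (Rabs q2 + 1)) (Rabs (ln (K / eps)))) in *.
  assert (M1 : Rabs q1 + 1 <= M) by (unfold M; eapply Rle_trans; [apply Rmax_l|apply Rmax_l]).
  assert (M2 : Rabs q2 + 1 <= M) by (unfold M; eapply Rle_trans; [apply Rmax_r|apply Rmax_l]).
  assert (M3 : Rabs (ln (K / eps)) <= M) by (unfold M; apply Rmax_r).
  assert (Hq1 := Rle_abs q1). assert (Hq1' := Rle_abs (- q1)). rewrite Rabs_Ropp in Hq1'.
  assert (Hq2 := Rle_abs q2). assert (Hq2' := Rle_abs (- q2)). rewrite Rabs_Ropp in Hq2'.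
  assert (Hl := Rle_abs (ln (K / eps))).
  rewrite <- RInt_Reals.
  rewrite (is_RInt_unique _ _ _ _ (Iall p1 p2 q1 q2 a b H ltac:(lra) ltac:(lra))).
  assert (E1 : h1 p1 p2 q1 q2 a = exp a * A).
  { unfold h1, A. unfold Rminus. rewrite !exp_plus. ring. }
  assert (E3 : h3 p1 p2 q1 q2 b = exp (- b) * B).
  { unfold h3, B. unfold Rminus. rewrite !exp_plus. ring. }
  assert (Eq : h1 p1 p2 q1 q2 q1 ^ 2 - h1 p1 p2 q1 q2 a ^ 2 +
    (QQ p2 q2 q2 ^ 2 - PP p1 q1 q2 ^ 2 - (QQ p2 q2 q1 ^ 2 - PP p1 q1 q1 ^ 2)) +
    (h3 p1 p2 q1 q2 q2 ^ 2 - h3 p1 p2 q1 q2 b ^ 2)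
    - (2 * p1 ^ 2 + 2 * p2 ^ 2 + 4 * p1 * p2 * exp (q1 - q2))
    = - (exp a ^ 2 * A ^ 2 + exp (- b) ^ 2 * B ^ 2)).
  { rewrite E1, E3. unfold h1, h3, QQ, PP.
    replace (q1 - q1) with 0 by ring. replace (q2 - q2) with 0 by ring.
    rewrite exp_0. ring. }
  rewrite Eq, Rabs_Ropp.
  set (e := exp (- M)).
  assert (He0 : 0 < e) by apply exp_pos.
  assert (He1 : e <= 1) by (unfold e; rewrite <- exp_0; apply exp_le_mono; lra).
  assert (He2 : e <= eps / K).
  { unfold e. replace (eps / K) with (exp (- ln (K / eps))).
    apply exp_le_mono; lra.
    rewrite exp_Ropp, exp_ln. field; lra. apply Rdiv_lt_0_compat; lra. }
  assert (Ea : 0 < exp a <= e) by (split; [apply exp_pos | apply exp_le_mono; lra]).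
  assert (Eb : 0 < exp (- b) <= e) by (split; [apply exp_pos | apply exp_le_mono; lra]).
  assert (HeK : e * K <= eps).
  { apply Rmult_le_reg_r with (/ K). apply Rinv_0_lt_compat; lra.
    replace (e * K * / K) with e by (field; lra). exact He2. }
  rewrite Rabs_right by nra.
  assert (exp a ^ 2 <= e) by nra.
  assert (exp (- b) ^ 2 <= e) by nra.
  assert (0 <= A ^ 2) by nra. assert (0 <= B ^ 2) by nra.
  unfold K in HeK. nra.
Qed.

Definition EE d1 d2 tau := exp (- (d1 - d2) * tau).
Definition P1 d1 d2 tau := (d2 - d1 * EE d1 d2 tau) / (1 - EE d1 d2 tau).
Definition P2 d1 d2 tau := (d1 - d2 * EE d1 d2 tau) / (1 - EE d1 d2 tau).
Definition Q1 d1 d2 tau := ln (d1 - d2) + d2 * tau - ln (d1 * EE d1 d2 tau - d2).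
Definition Q2 d1 d2 tau := - ln (d1 - d2) + d1 * tau + ln (d1 - d2 * EE d1 d2 tau).
Definition Hf d1 d2 tau := - (d1 * d2) * (d1 * exp (d1 * tau) - d2 * exp (d2 * tau))
   * (exp (d1 * tau) - exp (d2 * tau)) / ((d1 - d2) ^ 2 * exp (d1 * tau) * exp (d2 * tau)).

Lemma params d1 d2 tau : 0 < d1 -> d2 < 0 -> 0 < tau ->
  Q1 d1 d2 tau < Q2 d1 d2 tau /\
  2 * P1 d1 d2 tau ^ 2 + 2 * P2 d1 d2 tau ^ 2
    + 4 * P1 d1 d2 tau * P2 d1 d2 tau * exp (Q1 d1 d2 tau - Q2 d1 d2 tau)
    = 2 * d1 ^ 2 + 2 * d2 ^ 2 /\
  P1 d1 d2 tau + P2 d1 d2 tau = d1 + d2 /\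
  0 < P2 d1 d2 tau /\
  P2 d1 d2 tau * (Q2 d1 d2 tau - Q1 d1 d2 tau) <= Hf d1 d2 tau.
Proof.
  intros H1 H2 Ht.
  set (a1 := exp (d1 * tau)). set (a2 := exp (d2 * tau)).
  assert (Ha1 : 0 < a1) by apply exp_pos.
  assert (Ha2 : 0 < a2) by apply exp_pos.
  assert (Ha12 : a2 < a1) by (apply exp_increasing; nra).
  assert (HE : EE d1 d2 tau = a2 / a1).
  { unfold EE, a1, a2. replace (- (d1 - d2) * tau) with (d2 * tau + - (d1 * tau)) by ring.
    rewrite exp_plus, exp_Ropp. field. apply Rgt_not_eq, exp_pos. }
  assert (HL : 0 < d1 - d2) by lra.
  assert (X1 : 0 < d1 * a2 - d2 * a1) by nra.
  assert (X2 : 0 < d1 * a1 - d2 * a2) by nra.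
  assert (HP1 : P1 d1 d2 tau = (d2 * a1 - d1 * a2) / (a1 - a2)).
  { unfold P1; rewrite HE; field; lra. }
  assert (HP2 : P2 d1 d2 tau = (d1 * a1 - d2 * a2) / (a1 - a2)).
  { unfold P2; rewrite HE; field; lra. }
  assert (EQ1 : exp (Q1 d1 d2 tau) = (d1 - d2) * a1 * a2 / (d1 * a2 - d2 * a1)).
  { unfold Q1. rewrite HE.
    assert (Y : 0 < d1 * (a2 / a1) - d2).
    { replace (d1 * (a2 / a1) - d2) with ((d1 * a2 - d2 * a1) / a1) by (field; lra).
      apply Rdiv_lt_0_compat; lra. }
    replace (ln (d1 - d2) + d2 * tau - ln (d1 * (a2 / a1) - d2)) with
      (ln (d1 - d2) + d2 * tau + - ln (d1 * (a2 / a1) - d2)) by ring.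
    rewrite !exp_plus, exp_Ropp, !exp_ln by lra.
    fold a2. field. repeat split; lra. }
  assert (EQ2 : exp (Q2 d1 d2 tau) = (d1 * a1 - d2 * a2) / (d1 - d2)).
  { unfold Q2. rewrite HE.
    assert (Y : 0 < d1 - d2 * (a2 / a1)).
    { replace (d1 - d2 * (a2 / a1)) with ((d1 * a1 - d2 * a2) / a1) by (field; lra).
      apply Rdiv_lt_0_compat; lra. }
    rewrite !exp_plus, exp_Ropp, !exp_ln by lra.
    fold a1. field. lra. }
  assert (Ediff : exp (Q1 d1 d2 tau - Q2 d1 d2 tau) = exp (Q1 d1 d2 tau) / exp (Q2 d1 d2 tau)).
  { unfold Rminus. rewrite exp_plus, exp_Ropp. reflexivity. }
  assert (Ediff2 : exp (Q2 d1 d2 tau - Q1 d1 d2 tau) = exp (Q2 d1 d2 tau) / exp (Q1 d1 d2 tau)).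
  { unfold Rminus. rewrite exp_plus, exp_Ropp. reflexivity. }
  assert (Key : (d1 * a1 - d2 * a2) * (d1 * a2 - d2 * a1) - (d1 - d2) ^ 2 * a1 * a2
                = - (d1 * d2) * (a1 - a2) ^ 2) by ring.
  assert (Pos : 0 < - (d1 * d2) * (a1 - a2) ^ 2).
  { apply Rmult_lt_0_compat. nra. apply pow_lt; lra. }
  split; [|split; [|split; [|split]]].
  - apply exp_lt_inv. rewrite EQ1, EQ2.
    apply Rminus_gt_0_lt.
    replace ((d1 * a1 - d2 * a2) / (d1 - d2) - (d1 - d2) * a1 * a2 / (d1 * a2 - d2 * a1))
      with (((d1 * a1 - d2 * a2) * (d1 * a2 - d2 * a1) - (d1 - d2) ^ 2 * a1 * a2)
            / ((d1 - d2) * (d1 * a2 - d2 * a1))) by (field; lra).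
    apply Rdiv_lt_0_compat. lra. nra.
  - rewrite Ediff, EQ1, EQ2, HP1, HP2. field. repeat split; lra.
  - rewrite HP1, HP2. field. lra.
  - rewrite HP2. apply Rdiv_lt_0_compat; lra.
  - set (R := exp (Q2 d1 d2 tau - Q1 d1 d2 tau)).
    assert (Rl : Q2 d1 d2 tau - Q1 d1 d2 tau <= R - 1).
    { unfold R. generalize (exp_ineq1_le (Q2 d1 d2 tau - Q1 d1 d2 tau)). lra. }
    assert (HR : P2 d1 d2 tau * (R - 1) = Hf d1 d2 tau).
    { unfold R. rewrite Ediff2, EQ1, EQ2, HP2. unfold Hf. fold a1 a2.
      field. repeat split; lra. }
    rewrite <- HR. apply Rmult_le_compat_l; [|exact Rl].
    rewrite HP2. left; apply Rdiv_lt_0_compat; lra.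
Qed.

Lemma lip_neg u v : u <= 0 -> v <= 0 -> Rabs (exp u - exp v) <= Rabs (u - v).
Proof.
  intros Hu Hv.
  assert (K : forall u v, v <= u -> u <= 0 -> exp u - exp v <= u - v /\ 0 <= exp u - exp v).
  { clear. intros u v Hvu Hu.
    assert (E : exp v = exp u * exp (v - u)) by (rewrite <- exp_plus; f_equal; ring).
    assert (A := exp_ineq1_le (v - u)).
    assert (B : exp u <= 1) by (rewrite <- exp_0; destruct Hu as [Hu|Hu];
      [left; apply exp_increasing; auto | rewrite Hu; lra]).
    assert (C : exp (v - u) <= 1) by (rewrite <- exp_0; destruct (Rle_lt_or_eq_dec _ _ Hvu) as [h|h];
      [left; apply exp_increasing; lra | rewrite h; replace (u-u) with 0 by ring; lra]).
    assert (P := exp_pos u). assert (P' := exp_pos (v - u)).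
    rewrite E. split; nra. }
  destruct (Rle_dec v u) as [h|h].
  - destruct (K u v h Hu). rewrite Rabs_right, Rabs_right; lra.
  - destruct (K v u ltac:(lra) Hv). rewrite Rabs_left1, Rabs_left1; lra.
Qed.

Lemma lip A B : Rabs (exp (- Rabs A) - exp (- Rabs B)) <= Rabs (A - B).
Proof.
  eapply Rle_trans. apply lip_neg; generalize (Rabs_pos A) (Rabs_pos B); lra.
  replace (- Rabs A - - Rabs B) with (- (Rabs A - Rabs B)) by ring.
  rewrite Rabs_Ropp. apply Rabs_triang_inv2.
Qed.

Lemma cont_eps f x : continuity_pt f x -> forall eps, 0 < eps ->
  exists del, 0 < del /\ forall y, Rabs (y - x) < del -> Rabs (f y - f x) < eps.
Proof.
  intros H eps He. destruct (H eps He) as [a [Ha Hb]].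
  exists a; split; auto. intros y Hy. destruct (Req_dec y x) as [e|n].
  subst; unfold Rminus; rewrite Rplus_opp_r, Rabs_R0; lra.
  apply (Hb y). split; [split; [constructor | auto] | exact Hy].
Qed.

Lemma lim_part d1 d2 t0 x : 0 < d1 -> d2 < 0 ->
  limit1_in (fun t => P1 d1 d2 (t - t0) * exp (- Rabs (x - Q1 d1 d2 (t - t0)))
                    + P2 d1 d2 (t - t0) * exp (- Rabs (x - Q2 d1 d2 (t - t0))))
    (fun t => t0 < t) ((d1 + d2) * exp (- Rabs x)) t0.
Proof.
  intros H1 H2 eps Heps.
  set (s := d1 + d2).
  assert (CQ : continuity_pt (fun t => Q1 d1 d2 (t - t0)) t0).
  { apply continuity_pt_filterlim.
    apply (ex_derive_continuous (K:=R_AbsRing) (V:=R_NormedModule) (fun t => Q1 d1 d2 (t - t0))).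
    unfold Q1, EE. auto_derive.
    assert (exp (- (d1 - d2) * (t0 + - t0)) > 0) by apply exp_pos. nra. }
  assert (CH : continuity_pt (fun t => Hf d1 d2 (t - t0)) t0).
  { apply continuity_pt_filterlim.
    apply (ex_derive_continuous (K:=R_AbsRing) (V:=R_NormedModule) (fun t => Hf d1 d2 (t - t0))).
    unfold Hf. auto_derive.
    assert (exp (d1 * (t0 + - t0)) > 0) by apply exp_pos.
    assert (exp (d2 * (t0 + - t0)) > 0) by apply exp_pos.
    assert (0 < (d1 - d2) * ((d1 - d2) * 1)) by nra.
    apply Rgt_not_eq. apply Rmult_gt_0_compat; [|lra]. apply Rmult_gt_0_compat; lra. }
  assert (Q0 : Q1 d1 d2 (t0 - t0) = 0).
  { unfold Q1, EE. replace (t0 - t0) with 0 by ring.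
    rewrite !Rmult_0_r, exp_0, Rmult_1_r. ring. }
  assert (H0 : Hf d1 d2 (t0 - t0) = 0).
  { unfold Hf. replace (t0 - t0) with 0 by ring. replace (d1 * 0) with 0 by ring.
    replace (d2 * 0) with 0 by ring. unfold Rdiv. ring. }
  assert (Hs : 0 < 2 * (Rabs s + 1)) by (generalize (Rabs_pos s); lra).
  destruct (cont_eps _ _ CQ (eps / (2 * (Rabs s + 1)))) as [del1 [Hd1 Hq]].
  { apply Rdiv_lt_0_compat; lra. }
  destruct (cont_eps _ _ CH (eps / 2)) as [del2 [Hd2 Hh]]. lra.
  exists (Rmin del1 del2). split. apply Rmin_pos; auto.
  intros t [Ht Hdist]. simpl in Hdist. unfold R_dist in Hdist. simpl. unfold R_dist.
  assert (Hd1' : Rabs (t - t0) < del1) by (generalize (Rmin_l del1 del2); lra).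
  assert (Hd2' : Rabs (t - t0) < del2) by (generalize (Rmin_r del1 del2); lra).
  specialize (Hq t Hd1'). specialize (Hh t Hd2'). rewrite Q0 in Hq. rewrite H0 in Hh.
  rewrite Rminus_0_r in Hq, Hh.
  destruct (params d1 d2 (t - t0) H1 H2 ltac:(lra)) as [Hlt [_ [Hsum [HP2 Hb]]]].
  set (p2 := P2 d1 d2 (t - t0)) in *. set (q1 := Q1 d1 d2 (t - t0)) in *.
  set (q2 := Q2 d1 d2 (t - t0)) in *.
  replace (P1 d1 d2 (t - t0)) with (s - p2) by (unfold s; lra).
  set (e0 := exp (- Rabs x)). set (e1 := exp (- Rabs (x - q1))). set (e2 := exp (- Rabs (x - q2))).
  replace ((s - p2) * e1 + p2 * e2 - s * e0) with (s * (e1 - e0) + p2 * (e2 - e1)) by ring.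
  assert (L1 : Rabs (e1 - e0) <= Rabs q1).
  { unfold e1, e0. eapply Rle_trans. apply lip. replace (x - q1 - x) with (- q1) by ring.
    rewrite Rabs_Ropp; lra. }
  assert (L2 : Rabs (e2 - e1) <= q2 - q1).
  { unfold e1, e2. eapply Rle_trans. apply lip. replace (x - q2 - (x - q1)) with (q1 - q2) by ring.
    rewrite Rabs_left; lra. }
  eapply Rle_lt_trans. apply Rabs_triang.
  rewrite !Rabs_mult. rewrite (Rabs_right p2) by lra.
  assert (A1 : Rabs s * Rabs (e1 - e0) <= Rabs s * Rabs q1).
  { apply Rmult_le_compat_l; auto. apply Rabs_pos. }
  assert (A2 : p2 * Rabs (e2 - e1) <= p2 * (q2 - q1)) by (apply Rmult_le_compat_l; lra).
  assert (A3 : Hf d1 d2 (t - t0) < eps / 2) by (generalize (Rle_abs (Hf d1 d2 (t - t0))); lra).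
  assert (A4 : Rabs s * Rabs q1 <= Rabs s * (eps / (2 * (Rabs s + 1)))).
  { apply Rmult_le_compat_l. apply Rabs_pos. lra. }
  assert (A5 : Rabs s * (eps / (2 * (Rabs s + 1))) <= eps / 2).
  { unfold Rdiv. apply Rmult_le_reg_r with (2 * (Rabs s + 1)); auto.
    field_simplify; try lra. }
  lra.
Qed.

Theorem mainTheorem8 (c1 c2 alpha t0 : R) :
  c2 < 0 -> 0 < c1 -> 0 <= alpha < 1 ->
  (forall t, t0 < t -> q1t c1 c2 alpha t0 t <= q2t c1 c2 alpha t0 t) /\
  (forall x, limit1_in (fun t => u c1 c2 alpha t0 t x) (fun t => t0 < t)
               ((c1 + c2) * exp (- Rabs x)) t0) /\
  (forall t, t0 < t ->
     improper_integral_R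
       (fun x => u c1 c2 alpha t0 t x ^ 2
                 + deriv_or0 (fun y => u c1 c2 alpha t0 t y) x ^ 2)
       (2 * dd1 c1 c2 alpha ^ 2 + 2 * dd2 c1 c2 alpha ^ 2)) /\
  2 * dd1 c1 c2 alpha ^ 2 + 2 * dd2 c1 c2 alpha ^ 2
    = 2 * c1 ^ 2 + 2 * c2 ^ 2 + 4 * alpha * c1 * c2.
Proof.
  intros Hc2 Hc1 Ha.
  set (disc := (c1 + c2) ^ 2 / 4 - (1 - alpha) * c1 * c2).
  assert (Hdisc : 0 < disc).
  { unfold disc. assert (0 < (1 - alpha) * (c1 * - c2)) by (apply Rmult_lt_0_compat; nra).
    assert (0 <= (c1 + c2) ^ 2 / 4) by (unfold Rdiv; apply Rmult_le_pos; [apply pow2_ge_0 | lra]).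
    replace ((1 - alpha) * c1 * c2) with (- ((1 - alpha) * (c1 * - c2))) by ring. lra. }
  set (sq := sqrt disc).
  assert (Hsq : 0 < sq) by (apply sqrt_lt_R0; auto).
  assert (Hsq2 : sq * sq = disc) by (apply sqrt_sqrt; lra).
  assert (E1 : dd1 c1 c2 alpha = (c1 + c2) / 2 + sq) by reflexivity.
  assert (E2 : dd2 c1 c2 alpha = (c1 + c2) / 2 - sq) by reflexivity.
  set (d1 := dd1 c1 c2 alpha) in *. set (d2 := dd2 c1 c2 alpha) in *.
  assert (Hprod : d1 * d2 = (1 - alpha) * c1 * c2).
  { rewrite E1, E2. replace ((1 - alpha) * c1 * c2) with ((c1 + c2) ^ 2 / 4 - disc)
      by (unfold disc; ring). rewrite <- Hsq2. field. }
  assert (Hneg : d1 * d2 < 0).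
  { rewrite Hprod. assert (0 < (1 - alpha) * (c1 * - c2)) by (apply Rmult_lt_0_compat; nra).
    replace ((1 - alpha) * c1 * c2) with (- ((1 - alpha) * (c1 * - c2))) by ring. lra. }
  assert (H1 : 0 < d1) by nra.
  assert (H2 : d2 < 0) by nra.
  split; [|split; [|split]].
  - intros t Ht.
    change (Q1 d1 d2 (t - t0) <= Q2 d1 d2 (t - t0)).
    left. apply (params d1 d2 (t - t0) H1 H2). lra.
  - intros x. replace (c1 + c2) with (d1 + d2) by (rewrite E1, E2; field).
    exact (lim_part d1 d2 t0 x H1 H2).
  - intros t Ht.
    destruct (params d1 d2 (t - t0) H1 H2 ltac:(lra)) as [Hlt [Hv _]].
    rewrite <- Hv.
    exact (peak_int (P1 d1 d2 (t - t0)) (P2 d1 d2 (t - t0)) (Q1 d1 d2 (t - t0)) (Q2 d1 d2 (t - t0)) Hlt).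
  - rewrite E1, E2.
    replace (2 * ((c1 + c2) / 2 + sq) ^ 2 + 2 * ((c1 + c2) / 2 - sq) ^ 2)
      with ((c1 + c2) ^ 2 + 4 * (sq * sq)) by field.
    rewrite Hsq2. unfold disc. field.
Qed.
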